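(* Let $A$ be a densely defined closed operator in a complex Hilbert space $\mathcal{H}$ such that $\operatorname{Num}(A)$ has an interior point, $\operatorname{Num}(A)\neq\mathbb{C}$, and $\operatorname{D}(A)\subset\operatorname{D}(A^* )$. If $\lambda\in\partial\operatorname{Num}(A)$ is a point of unilateral infinite curvature of $\partial\overline{\operatorname{Num}}(A)$, then $\lambda\in\sigma(A)$.
   Context: $\operatorname{Num}(A)=\{\langle Af,f\rangle: f\in\operatorname{D}(A),\|f\|=1\}$ is the numerical range, $\overline{\operatorname{Num}}(A)$ its closure, $A^*$ the adjoint, $\sigma(A)$ the spectrum. Curvature conventions. Let $\Omega\subset\mathbb{C}$ be a closed convex set with nonempty interior and $\lambda\in\partial\Omega$. There is at least one supporting line of $\Omega$ through $\lambda$; $\lambda$ is called a corner point if there is more than one. If $\lambda$ is a corner point, $\Omega$ lies in a closed sector with vertex $\lambda$ and semivertical angle $<\pi/2$; take the smallest such sector and let $l_\lambda$ be the supporting line through $\lambda$ orthogonal to the axis of this sector; otherwise $l_\lambda$ is the unique supporting line. Use rectangular coordinates $(\xi,\eta)$ with origin at $\lambda$, $\xi$-axis equal to $l_\lambda$, oriented so that $\Omega\subset\{\eta\ge 0\}$. Let $D'_\varepsilon=\{(\xi,\eta):\xi^2+\eta^2\le\varepsilon^2,\ \xi\neq 0\}$. Define $\gamma_u^+(\lambda)=\lim_{\varepsilon\downarrow 0}\sup\{\eta/\xi^2:(\xi,\eta)\in\partial\Omega\cap D'_\varepsilon,\ \xi>0\}$ and $\gamma_l^+(\lambda)$ the same with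 $\inf$ in place of $\sup$; $\gamma_u^-(\lambda),\gamma_l^-(\lambda)$ are defined analogously with $\xi<0$. Set $\gamma_u(\lambda)=\max(\gamma_u^+(\lambda),\gamma_u^-(\lambda))$, $\gamma_l(\lambda)=\min(\gamma_l^+(\lambda),\gamma_l^-(\lambda))$. The point $\lambda$ is of infinite upper curvature if $\gamma_u(\lambda)=\infty$, and of unilateral infinite curvature if $\gamma_l^+(\lambda)=\infty$ or $\gamma_l^-(\lambda)=\infty$. For an operator $A$, these notions at $\lambda\in\partial\operatorname{Num}(A)$ refer to $\Omega=\overline{\operatorname{Num}}(A)$. *)

(* Defs.v *)
From Stdlib Require Import Reals.
Open Scope R_scope.

Record Cx := mkCx { re : R; im : R }.
Definition Czero : Cx := mkCx 0 0.
Definition Cone : Cx := mkCx 1 0.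
Definition Cadd (a b : Cx) : Cx := mkCx (re a + re b) (im a + im b).
Definition Copp (a : Cx) : Cx := mkCx (- re a) (- im a).
Definition Csub (a b : Cx) : Cx := Cadd a (Copp b).
Definition Cmul (a b : Cx) : Cx :=
  mkCx (re a * re b - im a * im b) (re a * im b + im a * re b).
Definition Cconj (a : Cx) : Cx := mkCx (re a) (- im a).
Definition Cabs (a : Cx) : R := sqrt (re a * re a + im a * im a).

(** * Complex Hilbert spaces (inner product linear in the first slot) *)
Record CHilbert := {
  hcar :> Type;
  hzero : hcar;
  hadd : hcar -> hcar -> hcar;
  hopp : hcar -> hcar;
  hscal : Cx -> hcar -> hcar;
  hinner : hcar -> hcar -> Cx;
  hadd_assoc : forall x y z, hadd x (hadd y z) = hadd (hadd x y) z;
  hadd_comm : forall x y, hadd x y = hadd y x;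
  hadd_0 : forall x, hadd x hzero = x;
  hadd_opp : forall x, hadd x (hopp x) = hzero;
  hscal_1 : forall x, hscal Cone x = x;
  hscal_assoc : forall a b x, hscal a (hscal b x) = hscal (Cmul a b) x;
  hscal_distr_l : forall a x y, hscal a (hadd x y) = hadd (hscal a x) (hscal a y);
  hscal_distr_r : forall a b x, hscal (Cadd a b) x = hadd (hscal a x) (hscal b x);
  hinner_add_l : forall x y z, hinner (hadd x y) z = Cadd (hinner x z) (hinner y z);
  hinner_scal_l : forall a x y, hinner (hscal a x) y = Cmul a (hinner x y);
  hinner_conj : forall x y, hinner y x = Cconj (hinner x y);
  hinner_pos : forall x, 0 <= re (hinner x x);
  hinner_def : forall x, re (hinner x x) = 0 -> x = hzero;
  hcomplete : forall u : nat -> hcar,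
    (forall eps, 0 < eps -> exists N, forall m n, (N <= m)%nat -> (N <= n)%nat ->
       sqrt (re (hinner (hadd (u m) (hopp (u n))) (hadd (u m) (hopp (u n))))) < eps) ->
    exists l, forall eps, 0 < eps -> exists N, forall n, (N <= n)%nat ->
       sqrt (re (hinner (hadd (u n) (hopp l)) (hadd (u n) (hopp l)))) < eps
}.

Section Ops.
Variable H : CHilbert.

Definition hsub (x y : H) : H := hadd H x (hopp H y).
Definition hnorm (x : H) : R := sqrt (re (hinner H x x)).

Definition hconv (u : nat -> H) (l : H) : Prop :=
  forall eps, 0 < eps -> exists N, forall n, (N <= n)%nat -> hnorm (hsub (u n) l) < eps.

Definition linear_operator (D : H -> Prop) (A : H -> H) : Prop :=
  D (hzero H) /\
  (forall x y, D x -> D y -> D (hadd H x y)) /\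
  (forall a x, D x -> D (hscal H a x)) /\
  (forall x y, D x -> D y -> A (hadd H x y) = hadd H (A x) (A y)) /\
  (forall a x, D x -> A (hscal H a x) = hscal H a (A x)).

Definition densely_defined (D : H -> Prop) : Prop :=
  forall x eps, 0 < eps -> exists y, D y /\ hnorm (hsub x y) < eps.

Definition closed_operator (D : H -> Prop) (A : H -> H) : Prop :=
  forall (u : nat -> H) f g, (forall n, D (u n)) -> hconv u f ->
    hconv (fun n => A (u n)) g -> D f /\ A f = g.

Definition adjoint_domain (D : H -> Prop) (A : H -> H) (g : H) : Prop :=
  exists h, forall f, D f -> hinner H (A f) g = hinner H f h.

Definition Num (D : H -> Prop) (A : H -> H) (z : Cx) : Prop :=
  exists f, D f /\ hnorm f = 1 /\ hinner H (A f) f = z.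

Definition resolvent (D : H -> Prop) (A : H -> H) (lam : Cx) : Prop :=
  exists B : H -> H,
    (forall x y, B (hadd H x y) = hadd H (B x) (B y)) /\
    (forall a x, B (hscal H a x) = hscal H a (B x)) /\
    (exists M, forall x, hnorm (B x) <= M * hnorm x) /\
    (forall x, D (B x) /\ hsub (A (B x)) (hscal H lam (B x)) = x) /\
    (forall f, D f -> B (hsub (A f) (hscal H lam f)) = f).

Definition spectrum (D : H -> Prop) (A : H -> H) (lam : Cx) : Prop :=
  ~ resolvent D A lam.

End Ops.

Definition Cclosure (S : Cx -> Prop) (z : Cx) : Prop :=
  forall eps, 0 < eps -> exists w, S w /\ Cabs (Csub z w) < eps.
Definition Cinterior (S : Cx -> Prop) (z : Cx) : Prop :=
  exists eps, 0 < eps /\ forall w, Cabs (Csub w z) < eps -> S w.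
Definition Cboundary (S : Cx -> Prop) (z : Cx) : Prop :=
  Cclosure S z /\ ~ Cinterior S z.

(** [n] is a unit inward normal of a supporting line of Omega through lam:
    the line {z | Re((z-lam) conj n) = 0} supports Omega and Omega lies in
    the closed half-plane {Re((z-lam) conj n) >= 0}. *)
Definition supp_normal (Om : Cx -> Prop) (lam n : Cx) : Prop :=
  Cabs n = 1 /\ forall z, Om z -> 0 <= re (Cmul (Csub z lam) (Cconj n)).

Definition corner_point (Om : Cx -> Prop) (lam : Cx) : Prop :=
  exists n1 n2, supp_normal Om lam n1 /\ supp_normal Om lam n2 /\
    n1 <> n2 /\ n1 <> Copp n2.

(** closed sector with vertex lam, unit axis direction a, and semivertical
    angle theta with c = cos theta (so 0 < c <-> theta < pi/2) *)
Definition sector (lam a : Cx) (c : R) (z : Cx) : Prop :=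
  c * Cabs (Csub z lam) <= re (Cmul (Csub z lam) (Cconj a)).

(** [n] is the (inward) unit normal of the distinguished line l_lam:
    - if lam is a corner point, n is the axis direction of the smallest closed
      sector with vertex lam and semivertical angle < pi/2 containing Omega,
      so l_lam (the line through lam orthogonal to the axis) has normal n;
    - otherwise l_lam is the unique supporting line, with inward normal n. *)
Definition l_normal (Om : Cx -> Prop) (lam n : Cx) : Prop :=
  supp_normal Om lam n /\
  (corner_point Om lam ->
     exists c, 0 < c /\ (forall z, Om z -> sector lam n c z) /\
       forall a c', Cabs a = 1 -> 0 < c' -> (forall z, Om z -> sector lam a c' z) ->
         forall z, sector lam n c z -> sector lam a c' z).

(** coordinates (xi, eta) with origin lam, xi-axis = l_lam, Omega in eta >= 0 *)
Definition xi_c (lam n z : Cx) : R := im (Cmul (Csub z lam) (Cconj n)).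
Definition eta_c (lam n z : Cx) : R := re (Cmul (Csub z lam) (Cconj n)).

(** gamma_l^+(lam) = +infinity, with inf unfolded:
    lim_{eps -> 0+} inf { eta/xi^2 : (xi,eta) in dOmega, xi^2+eta^2 <= eps^2, xi > 0 } = +oo *)
Definition gamma_l_plus_infinite (Om : Cx -> Prop) (lam n : Cx) : Prop :=
  forall M : R, exists delta, 0 < delta /\ forall eps, 0 < eps < delta ->
    forall z, Cboundary Om z ->
      let xi := xi_c lam n z in let eta := eta_c lam n z in
      xi * xi + eta * eta <= eps * eps -> 0 < xi -> M <= eta / (xi * xi).

Definition gamma_l_minus_infinite (Om : Cx -> Prop) (lam n : Cx) : Prop :=
  forall M : R, exists delta, 0 < delta /\ forall eps, 0 < eps < delta ->
    forall z, Cboundary Om z ->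
      let xi := xi_c lam n z in let eta := eta_c lam n z in
      xi * xi + eta * eta <= eps * eps -> xi < 0 -> M <= eta / (xi * xi).

Definition unilateral_infinite_curvature (Om : Cx -> Prop) (lam : Cx) : Prop :=
  exists n, l_normal Om lam n /\
    (gamma_l_plus_infinite Om lam n \/ gamma_l_minus_infinite Om lam n).

(* Main.v *)
Require Import Defs.
From Stdlib Require Import Reals Lra Psatz Classical.
Open Scope R_scope.

Lemma Cx_eq (a b : Cx) : re a = re b -> im a = im b -> a = b.
Proof. destruct a, b; simpl; intros; subst; reflexivity. Qed.

Section Basic.
Variable H : CHilbert.
Notation ip := (hinner H).

Lemma ip_scal_r a x y : ip x (hscal H a y) = Cmul (Cconj a) (ip x y).
Proof.
  rewrite (hinner_conj H (hscal H a y) x), hinner_scal_l, (hinner_conj H x y).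
  destruct a as [a1 a2], (ip x y) as [v1 v2].
  apply Cx_eq; simpl; ring.
Qed.

Lemma ip_add_r x y z : ip x (hadd H y z) = Cadd (ip x y) (ip x z).
Proof.
  rewrite (hinner_conj H (hadd H y z) x), hinner_add_l, (hinner_conj H x y), (hinner_conj H x z).
  destruct (ip x y), (ip x z). apply Cx_eq; simpl; ring.
Qed.

Lemma ip_exp x1 y1 x2 y2 t :
  ip (hadd H x1 (hscal H t y1)) (hadd H x2 (hscal H t y2)) =
  Cadd (Cadd (ip x1 x2) (Cmul (Cconj t) (ip x1 y2)))
       (Cadd (Cmul t (ip y1 x2)) (Cmul t (Cmul (Cconj t) (ip y1 y2)))).
Proof.
  rewrite hinner_add_l, !ip_add_r, !hinner_scal_l, !ip_scal_r. reflexivity.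
Qed.

Lemma ip_self_im x : im (ip x x) = 0.
Proof. pose proof (hinner_conj H x x) as E. destruct (ip x x) as [a b].
  injection E; simpl; intros; lra. Qed.

Lemma ip_zero_r y : ip y (hzero H) = Czero.
Proof.
  assert (E : ip (hzero H) y = Czero).
  { pose proof (hinner_add_l H (hzero H) (hzero H) y) as E.
    rewrite hadd_0 in E. destruct (ip (hzero H) y) as [a b].
    unfold Cadd in E; simpl in E. injection E; intros; apply Cx_eq; simpl; lra. }
  rewrite (hinner_conj H (hzero H) y), E. apply Cx_eq; simpl; lra.
Qed.

End Basic.

Section Op.
Variable H : CHilbert.
Variables (D : H -> Prop) (A : H -> H).
Hypothesis Hlin : linear_operator H D A.
Notation ip := (hinner H).

Lemma num_point x : D x -> 0 < re (ip x x) ->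
  Num H D A (mkCx (re (ip (A x) x) / re (ip x x)) (im (ip (A x) x) / re (ip x x))).
Proof.
  intros Dx Hpos.
  destruct Hlin as [_ [_ [Hsc [_ HAs]]]].
  set (N := re (ip x x)) in *.
  set (k := / sqrt N).
  assert (Hsq : sqrt N * sqrt N = N) by (apply sqrt_sqrt; lra).
  assert (Hsp : 0 < sqrt N) by (apply sqrt_lt_R0; lra).
  assert (Hk : k * k * N = 1).
  { assert (E : k * sqrt N = 1) by (unfold k; field; lra).
    rewrite <- Hsq. transitivity ((k * sqrt N) * (k * sqrt N)); [ring|]. rewrite E; ring. }
  assert (Hkk : / N = k * k).
  { apply (Rmult_eq_reg_r N); [|lra]. rewrite Rinv_l by lra. lra. }
  exists (hscal H (mkCx k 0) x). split; [apply Hsc; auto|split].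
  - unfold hnorm. rewrite hinner_scal_l, ip_scal_r.
    pose proof (ip_self_im H x) as Him. fold N.
    destruct (ip x x) as [a b]; simpl in *. subst N.
    replace (k * (k * a - - 0 * b) - 0 * (k * b + - 0 * a)) with 1 by nra.
    apply sqrt_1.
  - rewrite HAs by auto. rewrite hinner_scal_l, ip_scal_r.
    fold N. destruct (ip (A x) x) as [a b]. apply Cx_eq; simpl.
    + unfold Rdiv; rewrite Hkk.
      unfold Rdiv. ring.
    + unfold Rdiv; rewrite Hkk.
      unfold Rdiv. ring.
Qed.


Lemma clos_self (S : Cx -> Prop) z : S z -> Cclosure S z.
Proof.
  intros Hz eps He. exists z. split; auto. unfold Cabs, Csub, Cadd, Copp; simpl.
  replace ((re z + - re z) * (re z + - re z) + (im z + - im z) * (im z + - im z)) with 0 by ring.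
  rewrite sqrt_0; lra.
Qed.

Variables (lam n : Cx).
Hypothesis Hs : forall z, Cclosure (Num H D A) z -> 0 <= eta_c lam n z.

Lemma accretive x : D x ->
  0 <= (re (ip (A x) x) - re (ip x x) * re lam) * re n +
       (im (ip (A x) x) - re (ip x x) * im lam) * im n.
Proof.
  intros Dx.
  destruct (Req_dec (re (ip x x)) 0) as [H0|H0].
  - apply hinner_def in H0. subst x. rewrite !ip_zero_r. simpl. lra.
  - assert (Hp : 0 < re (ip x x)) by (pose proof (hinner_pos H x); lra).
    pose proof (Hs _ (clos_self _ _ (num_point x Dx Hp))) as He.
    unfold eta_c, Cmul, Csub, Cadd, Copp, Cconj in He; simpl in He.
    set (N := re (ip x x)) in *.
    set (X1 := re (ip (A x) x)) in *. set (X2 := im (ip (A x) x)) in *.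
    replace ((X1 - N * re lam) * re n + (X2 - N * im lam) * im n) with
      (N * ((X1 / N + - re lam) * re n - (X2 / N + - im lam) * - im n)) by (field; lra).
    apply Rmult_le_pos; lra.
Qed.

End Op.


Lemma descent (Om : Cx -> Prop) (lam n : Cx)
  (Hn : re n * re n + im n * im n = 1)
  (Hs : forall z, Om z -> 0 <= eta_c lam n z) z :
  Om z -> exists z', Cboundary Om z' /\ xi_c lam n z' = xi_c lam n z /\
     0 <= eta_c lam n z' <= eta_c lam n z.
Proof.
  intro Hz.
  set (sh := fun tau => mkCx (re z - tau * re n) (im z - tau * im n)).
  assert (Eeta : forall tau, eta_c lam n (sh tau) = eta_c lam n z - tau).
  { intro tau. unfold eta_c, sh, Cmul, Csub, Cadd, Copp, Cconj; simpl.
    destruct n as [n1 n2]; simpl in *. transitivity (((re z + - re lam) * n1 - (im z + - im lam) * - n2) - tau * (n1*n1+n2*n2)); [ring|]. rewrite Hn; ring. }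
  assert (Exi : forall tau, xi_c lam n (sh tau) = xi_c lam n z).
  { intro tau. unfold xi_c, sh, Cmul, Csub, Cadd, Copp, Cconj; simpl. ring. }
  set (E := fun tau => 0 <= tau /\ Om (sh tau)).
  assert (Hb : bound E).
  { exists (eta_c lam n z). intros tau [H0 H1]. apply Hs in H1. rewrite Eeta in H1. lra. }
  assert (He : exists x, E x).
  { exists 0. split; [lra|]. unfold sh. replace (mkCx (re z - 0 * re n) (im z - 0 * im n)) with z; auto.
    destruct z; simpl; f_equal; ring. }
  destruct (completeness E Hb He) as [m [Hub Hlub]].
  assert (Hm0 : 0 <= m). { destruct He as [x Hx]. pose proof (Hub x Hx). destruct Hx. lra. }
  assert (Hm1 : m <= eta_c lam n z).
  { apply Hlub. intros tau [H0 H1]. apply Hs in H1. rewrite Eeta in H1. lra. }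
  assert (Habs : forall a b, Cabs (Csub (sh a) (sh b)) = Rabs (a - b)).
  { intros a b. unfold Cabs, Csub, Cadd, Copp, sh; simpl.
    replace ((re z - a * re n + - (re z - b * re n)) * (re z - a * re n + - (re z - b * re n)) +
      (im z - a * im n + - (im z - b * im n)) * (im z - a * im n + - (im z - b * im n)))
     with ((a - b) * (a - b) * (re n * re n + im n * im n)) by ring.
    rewrite Hn, Rmult_1_r. apply sqrt_Rsqr_abs. }
  exists (sh m). split; [split|].
  - intros eps Heps.
    destruct (classic (exists tau, E tau /\ m - eps < tau)) as [[tau [Ht1 Ht2]]|Hn'].
    + exists (sh tau). split; [apply Ht1|]. rewrite Habs.
      pose proof (Hub tau Ht1). apply Rabs_def1; lra.
    + exfalso. assert (m <= m - eps); [|lra].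
      apply Hlub. intros x Hx. destruct (Rle_or_lt x (m - eps)); auto.
      exfalso; apply Hn'; eauto.
  - intros [e [He0 Hin]].
    assert (E (m + e / 2)).
    { split; [lra|]. apply Hin. rewrite Habs. rewrite Rabs_right; lra. }
    apply Hub in H. lra.
  - rewrite Exi, Eeta. split; [reflexivity|lra].
Qed.


Definition Y1f (a1 c1 c2 q1 t1 t2 : R) := a1 + t1 * c1 + t2 * c2 + t1 + (t1*t1+t2*t2) * q1.
Definition Y2f (a2 c1 c2 q2 t1 t2 : R) := a2 + t1 * c2 - t2 * c1 + t2 + (t1*t1+t2*t2) * q2.
Definition Nf (q1 q2 G t1 t2 : R) := 1 + 2 * (t1 * q1 + t2 * q2) + (t1*t1+t2*t2) * G.

Lemma sq_bound x y : 0 <= y -> x * x <= y * y -> - y <= x <= y.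
Proof. intros. nra. Qed.

Lemma sqle a b : 0 <= a <= b -> a * a <= b * b.
Proof. intros. nra. Qed.
Lemma sqle_abs x y : - y <= x <= y -> x * x <= y * y.
Proof. intros. nra. Qed.

Lemma final_arith (s B G eta0 al1 al2 u1 u2 w b1 b2 sg eps : R)
 (HB : 2 <= B) (Hs : 0 < s) (HsB : s*B <= /8) (HG : 0 <= G <= B)
 (Hal1 : -eta0 <= al1 <= eta0) (Hal2 : -eta0 <= al2 <= eta0) (He : 0 <= eta0 <= s*s/128)
 (Hu1 : -(s*s/4) <= u1 <= s*s/4) (Hu2 : -(s*s/4) <= u2 <= s*s/4)
 (Hw : -(s*B) <= w <= s*B) (Hb1 : -B <= b1 <= B) (Hb2 : -B <= b2 <= B)
 (Hsgc : sg = 1 \/ sg = -1) (Heps : 7*s <= eps)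
 (HE : 0 <= al1 + u1 + s*s*b1)
 (HC : let N := 1 + 2*w + s*s*G in let E := al1+u1+s*s*b1 in
       let X := al2+u2+2*sg*s+s*s*b2 in
       0 < N -> (X/N)*(X/N)+(E/N)*(E/N) <= eps*eps -> 0 < sg*(X/N) ->
       2*B+3 <= (E/N)/((X/N)*(X/N))) : False.
Proof.
  cbv zeta in HC.
  set (N := 1 + 2*w + s*s*G) in *.
  set (E := al1+u1+s*s*b1) in *.
  set (X := al2+u2+2*sg*s+s*s*b2) in *.
  assert (Hs2 : s * 2 <= s * B) by (apply Rmult_le_compat_l; lra).
  assert (Hs16 : s <= /16) by lra.
  assert (Hss0 : 0 < s*s) by (apply Rmult_lt_0_compat; lra).
  assert (Hss : s*s <= s / 16) by (replace (s/16) with (s * /16) by field; apply Rmult_le_compat_l; lra).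
  assert (HssB : s*s*B <= s/8) by (rewrite Rmult_assoc; replace (s/8) with (s * /8) by field; apply Rmult_le_compat_l; lra).
  assert (HssG0 : 0 <= s*s*G) by (apply Rmult_le_pos; lra).
  assert (HssG : s*s*G <= s*s*B) by (apply Rmult_le_compat_l; lra).
  assert (Hb1' : s*s*b1 <= s*s*B) by (apply Rmult_le_compat_l; lra).
  assert (Hb2' : - (s*s*B) <= s*s*b2 <= s*s*B).
  { split; [replace (-(s*s*B)) with (s*s*(-B)) by ring|]; apply Rmult_le_compat_l; lra. }
  assert (HN1 : 3/4 <= N) by (unfold N; lra).
  assert (HN2 : N <= 2) by (unfold N; lra).
  assert (HE2 : E <= s*s*(B+1)) by (unfold E; lra).
  assert (HE3 : E <= s) by (unfold E; lra).
  assert (HX1 : s <= sg * X).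
  { unfold X. destruct Hsgc as [-> | ->]; lra. }
  assert (HX2 : X * X <= (3*s) * (3*s)).
  { apply sqle_abs. unfold X. destruct Hsgc as [-> | ->]; lra. }
  assert (HXX : s * s <= X * X).
  { replace (X*X) with ((sg*X)*(sg*X)) by (destruct Hsgc as [-> | ->]; ring).
    apply sqle; lra. }
  assert (HX0 : X <> 0) by (intro Hx; destruct Hsgc as [-> | ->]; rewrite Hx in HX1; lra).
  assert (HN0 : N <> 0) by lra.
  assert (HXX0 : 0 < X * X) by lra.
  specialize (HC ltac:(lra)).
  assert (Hlhs : (X/N)*(X/N) + (E/N)*(E/N) <= eps*eps).
  { replace ((X/N)*(X/N) + (E/N)*(E/N)) with ((X*X + E*E)/(N*N)) by (field; lra).
    assert (HNN : 9/16 <= N*N) by (replace (9/16) with (3/4*(3/4)) by field; apply (sqle (3/4) N); lra).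
    assert (HEE : E*E <= s*s) by (apply sqle; lra).
    assert (Hee : (7*s)*(7*s) <= eps*eps) by (apply sqle; lra).
    apply (Rmult_le_reg_r (N*N)); [lra|]. unfold Rdiv; rewrite Rmult_assoc, Rinv_l by lra.
    rewrite Rmult_1_r.
    assert (eps*eps*(9/16) <= eps*eps*(N*N)) by (apply Rmult_le_compat_l; nra).
    lra. }
  specialize (HC Hlhs).
  assert (Hpos : 0 < sg * (X/N)).
  { replace (sg * (X/N)) with ((sg*X)/N) by (field; lra). apply Rdiv_lt_0_compat; lra. }
  specialize (HC Hpos).
  replace ((E/N)/((X/N)*(X/N))) with (E * N / (X*X)) in HC by (field; split; lra).
  assert (HEN : E * N <= E * 2) by (apply Rmult_le_compat_l; lra).
  assert (HEN2 : E * N <= (2*B+2) * (X*X)).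
  { assert ((2*B+2)*(s*s) <= (2*B+2)*(X*X)) by (apply Rmult_le_compat_l; lra). lra. }
  assert (E * N / (X*X) <= 2*B+2).
  { apply (Rmult_le_reg_r (X*X)); [lra|]. unfold Rdiv; rewrite Rmult_assoc, Rinv_l by lra. lra. }
  lra.
Qed.

Lemma real_core (n1 n2 a1 a2 c1 c2 q1 q2 G B s eta0 sg eps M : R)
  (Hn : n1*n1+n2*n2 = 1) (Hsg : sg*sg = 1) (HB : 2 <= B) (HG : 0 <= G <= B)
  (Hq : q1*q1+q2*q2 <= B*B/2) (Hs0 : 0 < s) (Hs1 : s <= /(8*B)) (Hs2 : 7*s <= eps)
  (Heta : eta0 = s*s/(64*B)) (Ha : a1*a1+a2*a2 < eta0*eta0) (HM : M = 2*B+3)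
  (Hacc : forall t1 t2, 0 <= Y1f a1 c1 c2 q1 t1 t2 * n1 + Y2f a2 c1 c2 q2 t1 t2 * n2)
  (Hcurv : forall t1 t2, let N := Nf q1 q2 G t1 t2 in
      let E := Y1f a1 c1 c2 q1 t1 t2 * n1 + Y2f a2 c1 c2 q2 t1 t2 * n2 in
      let X := Y2f a2 c1 c2 q2 t1 t2 * n1 - Y1f a1 c1 c2 q1 t1 t2 * n2 in
      0 < N -> (X/N)*(X/N) + (E/N)*(E/N) <= eps*eps -> 0 < sg * (X/N) ->
      M <= (E/N) / ((X/N)*(X/N))) : False.
Proof.
  set (al1 := a1*n1 + a2*n2). set (al2 := a2*n1 - a1*n2).
  assert (Hal : al1*al1 + al2*al2 < eta0*eta0).
  { replace (al1*al1+al2*al2) with ((a1*a1+a2*a2)*(n1*n1+n2*n2)) by (unfold al1, al2; ring).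
    rewrite Hn; lra. }
  assert (He0 : 0 < eta0) by (rewrite Heta; apply Rdiv_lt_0_compat; nra).
  assert (Hal1 : - eta0 <= al1 <= eta0) by (apply sq_bound; nra).
  assert (Hal2 : - eta0 <= al2 <= eta0) by (apply sq_bound; nra).
  set (b1 := q1*n1 + q2*n2). set (b2 := q2*n1 - q1*n2).
  assert (Hb : b1*b1+b2*b2 <= B*B/2).
  { replace (b1*b1+b2*b2) with ((q1*q1+q2*q2)*(n1*n1+n2*n2)) by (unfold b1, b2; ring).
    rewrite Hn; lra. }
  assert (Hb1 : - B <= b1 <= B) by (apply sq_bound; nra).
  assert (Hb2 : - B <= b2 <= B) by (apply sq_bound; nra).
  set (d1 := c1*n1 + c2*n2 + n1). set (d2 := c2*n1 - c1*n2 + n2).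
  set (DD := d1*d1+d2*d2).
  assert (HD : DD <= 4 * B * eta0).
  { set (r := /(2*B)).
    pose proof (Hacc (- r * d1) (- r * d2)) as HA.
    replace (Y1f a1 c1 c2 q1 (- r * d1) (- r * d2) * n1 + Y2f a2 c1 c2 q2 (- r * d1) (- r * d2) * n2)
      with (al1 - r * DD + r * r * DD * b1) in HA
      by (unfold Y1f, Y2f, al1, DD, d1, d2, b1; ring).
    assert (Hr : r * B = /2) by (unfold r; field; lra).
    assert (Hr0 : 0 < r) by (unfold r; apply Rinv_0_lt_compat; lra).
    assert (HDD : 0 <= DD) by (unfold DD; nra).
    assert (r * r * DD * b1 <= r * DD / 2).
    { replace (r * DD / 2) with (r * DD * (r * B)) by (rewrite Hr; field).
      assert (0 <= r * r * DD) by nra. nra. }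
    assert (r * DD / 2 <= eta0) by lra.
    replace (4 * B * eta0) with (2 * eta0 / r) by (unfold r; field; lra).
    apply (Rmult_le_reg_r r); [lra|]. unfold Rdiv. rewrite Rmult_assoc, Rinv_l by lra. lra. }
  assert (Hsgc : sg = 1 \/ sg = -1).
  { assert ((sg - 1) * (sg + 1) = 0) by (ring_simplify; lra).
    destruct (Rmult_integral _ _ H) as [H1|H1]; [left|right]; lra. }
  assert (HBs : s * B <= /8).
  { assert (E8 : /(8*B) * B = /8) by (field; lra). rewrite <- E8.
    apply Rmult_le_compat_r; lra. }
  assert (Hss0 : 0 < s*s) by (apply Rmult_lt_0_compat; lra).
  assert (HDs : DD <= s * s / 16).
  { eapply Rle_trans; [exact HD|]. rewrite Heta. right; field; lra. }
  set (t1 := - sg * s * n2). set (t2 := sg * s * n1).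
  assert (HT : t1*t1+t2*t2 = s*s).
  { unfold t1, t2. replace (- sg * s * n2 * (- sg * s * n2) + sg * s * n1 * (sg * s * n1))
      with ((sg*sg)*(s*s)*(n1*n1+n2*n2)) by ring. rewrite Hsg, Hn; ring. }
  set (u1 := t1 * d1 + t2 * d2). set (u2 := t1 * d2 - t2 * d1).
  assert (Hu : u1*u1 + u2*u2 = s*s*DD).
  { rewrite <- HT. unfold u1, u2, DD. ring. }
  assert (Hsd : s*s*DD <= (s*s/4)*(s*s/4)).
  { replace ((s*s/4)*(s*s/4)) with (s*s*(s*s/16)) by field. apply Rmult_le_compat_l; lra. }
  assert (Hu1 : - (s*s/4) <= u1 <= s*s/4).
  { apply sq_bound; [lra|]. pose proof (Rle_0_sqr u2). unfold Rsqr in *. lra. }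
  assert (Hu2 : - (s*s/4) <= u2 <= s*s/4).
  { apply sq_bound; [lra|]. pose proof (Rle_0_sqr u1). unfold Rsqr in *. lra. }
  set (w := t1*q1 + t2*q2).
  assert (Hw1 : - (s*B) <= w <= s*B).
  { apply sq_bound; [apply Rmult_le_pos; lra|].
    assert (Eid : (t1*t1+t2*t2)*(q1*q1+q2*q2) - w*w = (t1*q2 - t2*q1)*(t1*q2-t2*q1)) by (unfold w; ring).
    pose proof (Rle_0_sqr (t1*q2 - t2*q1)) as Hsq. unfold Rsqr in Hsq.
    rewrite HT in Eid.
    assert (s*s*(q1*q1+q2*q2) <= s*s*(B*B/2)) by (apply Rmult_le_compat_l; lra).
    assert (0 <= s*s*(B*B)) by (apply Rmult_le_pos; [lra|]; apply Rmult_le_pos; lra).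
    replace (s*B*(s*B)) with (s*s*(B*B)) by ring.
    replace (s*s*(B*B/2)) with (s*s*(B*B)/2) in H by field. lra. }
  pose proof (Hcurv t1 t2) as HC. cbv zeta in HC.
  assert (EN : Nf q1 q2 G t1 t2 = 1 + 2 * w + s*s*G) by (unfold Nf, w; rewrite HT; ring).
  assert (EE : Y1f a1 c1 c2 q1 t1 t2 * n1 + Y2f a2 c1 c2 q2 t1 t2 * n2 = al1 + u1 + s*s*b1).
  { rewrite <- HT. unfold Y1f, Y2f, al1, u1, b1, d1, d2. ring. }
  assert (EX : Y2f a2 c1 c2 q2 t1 t2 * n1 - Y1f a1 c1 c2 q1 t1 t2 * n2 = al2 + u2 + 2*sg*s + s*s*b2).
  { replace (2*sg*s) with (2*(t2*n1 - t1*n2)).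
    - rewrite <- HT. unfold Y1f, Y2f, al2, u2, b2, d1, d2. ring.
    - unfold t1, t2. replace (2 * (sg * s * n1 * n1 - - sg * s * n2 * n2)) with (2*sg*s*(n1*n1+n2*n2)) by ring.
      rewrite Hn; ring. }
  rewrite EN, EE, EX in HC.
  pose proof (Hacc t1 t2) as HE. rewrite EE in HE.
  assert (Heta2 : eta0 <= s * s / 128).
  { rewrite Heta. unfold Rdiv. apply Rmult_le_compat_l; [lra|].
    apply Rinv_le_contravar; lra. }
  rewrite HM in HC.
  apply (final_arith s B G eta0 al1 al2 u1 u2 w b1 b2 sg eps); try lra; exact HC.
Qed.


Section K.
Variable H : CHilbert.
Variables (D : H -> Prop) (A : H -> H).
Hypothesis Hlin : linear_operator H D A.
Notation ip := (hinner H).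
Variable lam : Cx.

Lemma expand_key f g t : D f -> D g -> A g = hadd H f (hscal H lam g) ->
  ip f f = mkCx 1 0 ->
  let x := hadd H f (hscal H t g) in
  let q := ip f g in let p := ip (A f) f in let r := ip (A f) g in
  let G := re (ip g g) in
  let a1 := re p - re lam in let a2 := im p - im lam in
  let c1 := re r - (re lam * re q - im lam * im q) in
  let c2 := im r - (re lam * im q + im lam * re q) in
  D x /\ re (ip x x) = Nf (re q) (im q) G (re t) (im t) /\
  re (ip (A x) x) - re (ip x x) * re lam = Y1f a1 c1 c2 (re q) (re t) (im t) /\
  im (ip (A x) x) - re (ip x x) * im lam = Y2f a2 c1 c2 (im q) (re t) (im t).
Proof.
  intros Df Dg HAg Hff. cbv zeta.
  destruct Hlin as [_ [Dadd [Dsc [Aadd Asc]]]].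
  assert (Dx : D (hadd H f (hscal H t g))) by (apply Dadd; auto).
  assert (HAx : A (hadd H f (hscal H t g)) = hadd H (A f) (hscal H t (A g))).
  { rewrite Aadd, Asc; auto. }
  rewrite HAx, !ip_exp. rewrite HAg.
  rewrite !hinner_add_l, !hinner_scal_l, Hff.
  rewrite (hinner_conj H f g).
  pose proof (ip_self_im H g) as Hgg.
  destruct (ip g g) as [G0 G1]; simpl in Hgg; subst G1.
  destruct (ip f g) as [q1 q2], (ip (A f) f) as [p1 p2], (ip (A f) g) as [r1 r2],
    t as [t1 t2], lam as [l1 l2].
  unfold Nf, Y1f, Y2f, Cadd, Cmul, Cconj; simpl.
  split; [exact Dx|]. split; [ring|]. split; ring.
Qed.
End K.


Theorem mainTheorem3 (H : CHilbert) (D : H -> Prop) (A : H -> H)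
  (Hlin : linear_operator H D A)
  (Hdense : densely_defined H D)
  (Hclosed : closed_operator H D A)
  (Hint : exists z, Cinterior (Num H D A) z)
  (Hnotall : exists z, ~ Num H D A z)
  (Hdom : forall f, D f -> adjoint_domain H D A f)
  (lam : Cx)
  (Hbd : Cboundary (Num H D A) lam)
  (Hcurv : unilateral_infinite_curvature (Cclosure (Num H D A)) lam) :
  spectrum H D A lam.
Proof.
  unfold spectrum. intro Hres.
  destruct Hcurv as [n [[[Hn1 Hsupp] _] Hgam]].
  assert (Hn : re n * re n + im n * im n = 1).
  { unfold Cabs in Hn1. pose proof (sqrt_sqrt (re n * re n + im n * im n)) as E.
    rewrite Hn1 in E. rewrite <- E; [ring|]. nra. }
  set (Om := Cclosure (Num H D A)) in *.
  assert (Hsg : exists sg, sg * sg = 1 /\ forall M, exists delta, 0 < delta /\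
     forall eps, 0 < eps < delta -> forall z, Cboundary Om z ->
     xi_c lam n z * xi_c lam n z + eta_c lam n z * eta_c lam n z <= eps * eps ->
     0 < sg * xi_c lam n z -> M <= eta_c lam n z / (xi_c lam n z * xi_c lam n z)).
  { destruct Hgam as [Hg|Hg]; [exists 1|exists (-1)]; (split; [ring|]);
      intro M; destruct (Hg M) as [dl [Hdl Hd]]; exists dl; split; auto;
      intros eps Heps z Hz H1 H2; apply (Hd eps Heps z Hz); auto; lra. }
  destruct Hsg as [sg [Hsg Hc]].
  destruct Hres as [R [_ [_ [[K0 HK] [HR _]]]]].
  set (B := K0 * K0 + 2).
  set (M := 2 * B + 3).
  destruct (Hc M) as [delta [Hdl Hcd]].
  set (eps := delta / 2).
  assert (HB : 2 <= B) by (unfold B; nra).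
  set (s := Rmin (/(8*B)) (eps/7)).
  assert (Hs0 : 0 < s).
  { unfold s. apply Rmin_pos; [apply Rinv_0_lt_compat; lra|unfold eps; lra]. }
  set (eta0 := s * s / (64 * B)).
  assert (He0 : 0 < eta0) by (unfold eta0; apply Rdiv_lt_0_compat; nra).
  destruct Hbd as [Hcl _].
  destruct (Hcl eta0 He0) as [w [[f [Df [Hf1 Hfw]]] Hw]].
  destruct (HR f) as [Dg Hg].
  set (g := R f) in *.
  assert (HAg : A g = hadd H f (hscal H lam g)).
  { rewrite <- Hg. unfold hsub. rewrite <- hadd_assoc.
    rewrite (hadd_comm H (hopp H _) (hscal H lam g)), hadd_opp, hadd_0. reflexivity. }
  assert (Hff : hinner H f f = mkCx 1 0).
  { pose proof (ip_self_im H f) as Him. unfold hnorm in Hf1.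
    pose proof (sqrt_sqrt (re (hinner H f f)) (hinner_pos H f)) as E. rewrite Hf1 in E.
    apply Cx_eq; simpl; lra. }
  assert (Hexp := fun t => expand_key H D A Hlin lam f g t Df Dg HAg Hff). cbv zeta in Hexp.
  rewrite Hfw in Hexp.
  set (q := hinner H f g) in *. set (r := hinner H (A f) g) in *.
  set (G := re (hinner H g g)) in *.
  assert (HG0 : 0 <= G) by apply hinner_pos.
  assert (HGK : G <= K0 * K0).
  { pose proof (HK f) as Hk. fold g in Hk. unfold hnorm in Hk. rewrite Hff in Hk. simpl in Hk.
    rewrite sqrt_1, Rmult_1_r in Hk. fold G in Hk.
    rewrite <- (sqrt_sqrt G HG0). apply sqle. split; [apply sqrt_pos|lra]. }
  assert (Hqb : forall t1 t2, 0 <= Nf (re q) (im q) G t1 t2).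
  { intros t1 t2. destruct (Hexp (mkCx t1 t2)) as [_ [EN _]]. simpl in EN. rewrite <- EN. apply hinner_pos. }
  assert (Hq : re q * re q + im q * im q <= B * B / 2).
  { pose proof (Hqb 1 0). pose proof (Hqb (-1) 0). pose proof (Hqb 0 1). pose proof (Hqb 0 (-1)).
    unfold Nf in *.
    assert (- (B/2) <= re q <= B/2) by (unfold B; lra).
    assert (- (B/2) <= im q <= B/2) by (unfold B; lra).
    assert (re q * re q <= B/2 * (B/2)) by (apply sqle_abs; lra).
    assert (im q * im q <= B/2 * (B/2)) by (apply sqle_abs; lra).
    lra. }
  apply (real_core (re n) (im n) (re w - re lam) (im w - im lam)
    (re r - (re lam * re q - im lam * im q)) (im r - (re lam * im q + im lam * re q))
    (re q) (im q) G B s eta0 sg eps M).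
  - exact Hn.
  - exact Hsg.
  - exact HB.
  - unfold B; lra.
  - exact Hq.
  - exact Hs0.
  - unfold s; apply Rmin_l.
  - assert (s <= eps / 7) by (unfold s; apply Rmin_r). lra.
  - reflexivity.
  - unfold Cabs, Csub, Cadd, Copp in Hw; simpl in Hw.
    set (X := (re lam + - re w) * (re lam + - re w) + (im lam + - im w) * (im lam + - im w)) in Hw.
    assert (HX : 0 <= X) by (unfold X; pose proof (Rle_0_sqr (re lam + - re w)); pose proof (Rle_0_sqr (im lam + - im w)); unfold Rsqr in *; lra).
    replace ((re w - re lam) * (re w - re lam) + (im w - im lam) * (im w - im lam)) with X by (unfold X; ring).
    rewrite <- (sqrt_sqrt X HX). pose proof (sqrt_pos X). apply Rmult_le_0_lt_compat; lra.
  - reflexivity.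
  - intros t1 t2. destruct (Hexp (mkCx t1 t2)) as [Dx [EN [E1 E2]]]. simpl in E1, E2.
    pose proof (accretive H D A Hlin lam n Hsupp _ Dx) as Hac. rewrite E1, E2 in Hac. exact Hac.
  - intros t1 t2. cbv zeta. intros HN Hle Hpos.
    destruct (Hexp (mkCx t1 t2)) as [Dx [EN [E1 E2]]]. simpl in EN, E1, E2.
    set (x := hadd H f (hscal H (mkCx t1 t2) g)) in *.
    rewrite <- EN in HN.
    pose proof (num_point H D A Hlin x Dx HN) as Hz.
    set (z := mkCx _ _) in Hz.
    set (EE := Y1f (re w - re lam) (re r - (re lam * re q - im lam * im q))
            (im r - (re lam * im q + im lam * re q)) (re q) t1 t2 * re n +
          Y2f (im w - im lam) (re r - (re lam * re q - im lam * im q))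
            (im r - (re lam * im q + im lam * re q)) (im q) t1 t2 * im n) in *.
    set (XX := Y2f (im w - im lam) (re r - (re lam * re q - im lam * im q))
            (im r - (re lam * im q + im lam * re q)) (im q) t1 t2 * re n -
          Y1f (re w - re lam) (re r - (re lam * re q - im lam * im q))
            (im r - (re lam * im q + im lam * re q)) (re q) t1 t2 * im n) in *.
    set (NN := Nf (re q) (im q) G t1 t2) in *.
    assert (Heta : eta_c lam n z = EE / NN).
    { unfold EE, XX. rewrite <- E1, <- E2, <- EN. unfold eta_c, z, Cmul, Csub, Cadd, Copp, Cconj; simpl.
      field. rewrite EN. lra. }
    assert (Hxi : xi_c lam n z = XX / NN).
    { unfold EE, XX. rewrite <- E1, <- E2, <- EN. unfold xi_c, z, Cmul, Csub, Cadd, Copp, Cconj; simpl.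
      field. rewrite EN. lra. }
    destruct (descent Om lam n Hn Hsupp z (clos_self _ _ Hz)) as [z' [Hbz [Hx' [He1 He2]]]].
    rewrite Hxi in Hx'. rewrite Heta in He2.
    assert (Hxx : 0 < XX / NN * (XX / NN)).
    { destruct (Rtotal_order (XX/NN) 0) as [h|[h|h]]; [nra| |nra].
      rewrite h in Hpos. lra. }
    assert (Hm := Hcd eps ltac:(unfold eps; lra) z' Hbz).
    rewrite Hx' in Hm.
    assert (HE0 : 0 <= EE / NN) by lra.
    assert (eta_c lam n z' * eta_c lam n z' <= EE/NN * (EE/NN)) by (apply sqle; lra).
    specialize (Hm ltac:(lra) Hpos).
    eapply Rle_trans; [exact Hm|].
    unfold Rdiv at 1 3. apply Rmult_le_compat_r; [|lra].
    left. apply Rinv_0_lt_compat. exact Hxx.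
Qed.
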